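(* Let $\mathcal G$ be a network, $h\in\mathbb R^{\mathcal V}$ and $a\in\{\pm1\}$. The coordination game on $\mathcal G$ with external field $h$ has $a\mathbf 1$ as its unique equilibrium if and only if both: (a) $w\ngeq a h$; and (b) every nonempty subset $\mathcal R\subseteq\mathcal V\setminus\mathcal S_a(h)$ contains some node $i$ with $w_i^{\mathcal R}<w_i^{\mathcal V\setminus\mathcal R}+a h_i$.
   Context: A network is $\mathcal G=(\mathcal V,\mathcal E,W)$ with finite node set $\mathcal V$, links $\mathcal E\subseteq\mathcal V\times\mathcal V$, weight matrix $W\in\mathbb R_+^{\mathcal V\times\mathcal V}$ with zero diagonal, $W_{ij}>0$ iff $(i,j)\in\mathcal E$; for $\mathcal S\subseteq\mathcal V$, $w_i^{\mathcal S}=\sum_{j\in\mathcal S}W_{ij}$; $w=W\mathbf 1$. $\mathcal X=\{-1,+1\}^{\mathcal V}$. $x\ngeq y$ means $x_i<y_i$ for some $i$. $\mathcal S_a(h)=\{i\in\mathcal V: a h_i>w_i\}$. Coordination game on $\mathcal G$ with external field $h$: players $\mathcal V$, actions $\{\pm1\}$, utilities $u_i(x)=x_i(\sum_jW_{ij}x_j+h_i)$; $x^*$ is an equilibrium if for every $i$, $x_i^*$ maximizes $u_i(\cdot,x^*_{-i})$ over $\{\pm1\}$. *)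

(* Defs.v *)
From HB Require Import structures.
From mathcomp Require Import all_boot all_order all_algebra.
Set Implicit Arguments. Unset Strict Implicit. Unset Printing Implicit Defensive.
Import Order.TTheory GRing.Theory Num.Theory.
Local Open Scope ring_scope.

Section Network.
Variables (R : realFieldType) (V : finType).

Definition wS (W : V -> V -> R) (S : {set V}) (i : V) : R := \sum_(j in S) W i j.

Definition wdeg (W : V -> V -> R) (i : V) : R := \sum_j W i j.

Definition Sa (W : V -> V -> R) (a : R) (h : V -> R) : {set V} :=
  [set i | wdeg W i < a * h i].

Definition is_config (x : V -> R) : Prop := forall i, x i = 1 \/ x i = -1.

Definition util (W : V -> V -> R) (h : V -> R) (x : V -> R) (i : V) : R :=
  x i * (\sum_j W i j * x j + h i).

Definition update (x : V -> R) (i : V) (s : R) : V -> R :=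
  fun j => if j == i then s else x j.

Definition is_equilibrium (W : V -> V -> R) (h : V -> R) (x : V -> R) : Prop :=
  is_config x /\
  forall i (s : R), (s = 1 \/ s = -1) -> util W h (update x i s) i <= util W h x i.

End Network.

(* Main.v *)
Require Import Defs.
From HB Require Import structures.
From mathcomp Require Import all_boot all_order all_algebra.
From mathcomp Require Import zify ring lra.
Import Order.TTheory GRing.Theory Num.Theory.
Local Open Scope ring_scope.

Section Aux.
Variables (R : realFieldType) (V : finType) (W : V -> V -> R).

Lemma wdeg_split (T : {set V}) i :
  wdeg W i = wS W T i + \sum_(j | j \notin T) W i j.
Proof. by rewrite /wdeg (bigID (fun j => j \in T)). Qed.

Lemma wSC (T : {set V}) i : wS W (~: T) i = wdeg W i - wS W T i.
Proof.
rewrite (wdeg_split T i) /wS.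
have -> : \sum_(j in ~: T) W i j = \sum_(j | j \notin T) W i j.
  by apply: eq_bigl => j; rewrite in_setC.
by ring.
Qed.

Lemma sum_split (a : R) (x : V -> R) (T : {set V}) i
  (hx : forall j, x j = if j \in T then -a else a) :
  \sum_j W i j * x j = a * (wdeg W i - wS W T i) - a * wS W T i.
Proof.
rewrite (bigID (fun j => j \in T)) /=.
have -> : \sum_(j | j \in T) W i j * x j = \sum_(j in T) W i j * (- a).
  by apply: eq_bigr => j jT; rewrite hx jT.
have -> : \sum_(j | j \notin T) W i j * x j = \sum_(j | j \notin T) W i j * a.
  by apply: eq_bigr => j jT; rewrite hx (negbTE jT).
rewrite -!big_distrl /= (wdeg_split T i) -/(wS W T i).
ring.
Qed.

Lemma wS_U1 (T : {set V}) i j : i \notin T -> wS W (i |: T) j = W j i + wS W T j.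
Proof. by move=> iT; rewrite /wS big_setU1. Qed.

Lemma sum_upd (x : V -> R) i s (Wd : W i i = 0) :
  \sum_j W i j * update x i s j = \sum_j W i j * x j.
Proof.
apply: eq_bigr => j _; rewrite /update.
by case: eqP => [->|//]; rewrite Wd !mul0r.
Qed.

Lemma eq_char (h : V -> R) (x : V -> R) (Wd : forall i, W i i = 0) :
  is_equilibrium W h x <->
  (is_config x /\ forall i, 0 <= x i * (\sum_j W i j * x j + h i)).
Proof.
rewrite /is_equilibrium /util.
split=> -[hc H]; split=> // i.
- have := H i (- x i).
  have -> : update x i (- x i) i = - x i by rewrite /update eqxx.
  rewrite sum_upd //.
  case: (hc i) => ->; [move=> /(_ (or_intror erefl))|move=> /(_ (or_introl _))];
    rewrite ?opprK => K; try (have := K erefl); lra.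
- move=> s hs; rewrite sum_upd // /update eqxx.
  have := H i; case: (hc i) => ->; case: hs => ->; lra.
Qed.

End Aux.

Theorem proposition5 (R : realFieldType) (V : finType) (W : V -> V -> R)
    (h : V -> R) (a : R)
    (V_nonempty : (0 < #|V|)%N)
    (W_nonneg : forall i j, 0 <= W i j)
    (W_diag : forall i, W i i = 0)
    (a_pm1 : a = 1 \/ a = -1) :
  (forall x : V -> R, is_equilibrium W h x <-> (forall i, x i = a))
  <->
  ((exists i, wdeg W i < a * h i) /\
   (forall Rs : {set V}, Rs != set0 -> Rs \subset ~: Sa W a h ->
      exists2 i, i \in Rs & wS W Rs i < wS W (~: Rs) i + a * h i)).
Proof.
have EC := fun x => @eq_char R V W h x W_diag.
have haa : a * a = 1 by case: a_pm1 => ->; lra.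
have wge0 : forall T i, 0 <= wS W T i by move=> T i; apply: sumr_ge0.
have wdS : forall T i, wS W T i <= wdeg W i.
  by move=> T i; have := wge0 (~: T) i; rewrite wSC; lra.

(* equilibrium built from a maximal set *)
have build : forall n (T : {set V}), (#|~: T| <= n)%N -> T != set0 ->
    (forall i, i \in T -> wS W (~: T) i + a * h i <= wS W T i) ->
    exists x, is_equilibrium W h x /\ ~ (forall i, x i = a).
  { elim=> [|n IH] T hn hT0 hP.
  all: case: (boolP [exists i in ~: T, wS W (~: T) i + a * h i < wS W T i]).
  - case/exists_inP=> i; rewrite leqn0 cards_eq0 in hn.
    by rewrite (eqP hn) in_set0.
  - 2: case/exists_inP=> i; rewrite in_setC => iT hi.
    2: apply: (IH (i |: T)).
    3: by apply/set0Pn; exists i; rewrite setU11.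
    2: { have := cardsC T; have := cardsC (i |: T); rewrite cardsU1 iT /=.
         move: hn; lia. }
    2: { move=> j; rewrite !wSC in hi hP *.
         rewrite wS_U1 // in_setU1.
         case/predU1P=> [->|jT]; first by rewrite W_diag; lra.
         have := hP j jT; rewrite wSC; have := W_nonneg j i; lra. }
  all: move/exists_inPn=> hN.
  all: exists (fun j => if j \in T then -a else a); split; last first.
  1,3: case/set0Pn: hT0 => t tT /(_ t); rewrite tT; case: a_pm1 => ->; lra.
  all: apply/EC; split; first by move=> j /=; case: (j \in T); case: a_pm1 => ->; rewrite ?opprK; auto.
  all: move=> i; rewrite (@sum_split _ _ _ a _ T) //.
  all: case: ifP => iT.
  1,3: have := hP i iT; rewrite wSC => K;
       have -> : - a * (a * (wdeg W i - wS W T i) - a * wS W T i + h i) =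
                 - (a * a) * (wdeg W i - wS W T i) + (a * a) * wS W T i - a * h i by ring.
  1,2: rewrite haa; lra.
  all: have := hN i; rewrite in_setC iT => /(_ isT); rewrite -leNgt wSC => K;
       have -> : a * (a * (wdeg W i - wS W T i) - a * wS W T i + h i) =
                 (a * a) * (wdeg W i - wS W T i) - (a * a) * wS W T i + a * h i by ring.
  all: rewrite haa; lra. }
split.
- move=> H; split.
  + case: (boolP [exists i, wdeg W i < a * h i]) => [/existsP//|/existsPn hN].
    exfalso.
    have : is_equilibrium W h (fun _ => - a).
      apply/EC; split; first by move=> j; case: a_pm1 => ->; rewrite ?opprK; auto.
      move=> i; rewrite -big_distrl /= -/(wdeg W i).
      have := hN i; rewrite -leNgt => K.
      have -> : - a * (wdeg W i * - a + h i) = (a * a) * wdeg W i - a * h i by ring.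
      rewrite haa; lra.
    move/H; case/card_gt0P: V_nonempty => v0 _ /(_ v0) ha.
    by case: a_pm1 ha => ->; lra.
  + move=> Rs hR0 _.
    case: (boolP [exists i in Rs, wS W Rs i < wS W (~: Rs) i + a * h i]).
      by case/exists_inP=> i; exists i.
    move/exists_inPn=> hN; exfalso.
    have hP : forall i, i \in Rs -> wS W (~: Rs) i + a * h i <= wS W Rs i.
      by move=> i iR; have := hN i iR; rewrite -leNgt.
    have [x [/H hx hna]] := build _ Rs (leqnn _) hR0 hP.
    exact: hna.
- case=> _ hb x; split.
  + case/EC=> hc hx i.
    apply/eqP; apply/negPn/negP => hxi.
    set Rs := [set j | x j != a].
    have xR : forall j, x j = if j \in Rs then - a else a.
      have n1 : ((-1:R) == 1) = false by apply/eqP; lra.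
      have n2 : ((1:R) == -1) = false by apply/eqP; lra.
      move=> j; rewrite inE.
      by case: (hc j) => ->; case: a_pm1 => ->; rewrite ?eqxx ?n1 ?n2 /= ?opprK.
    have val : forall j, j \in Rs ->
        x j * (\sum_k W j k * x k + h j) = wS W Rs j - wS W (~: Rs) j - a * h j.
      move=> j jR; rewrite (@sum_split _ _ _ a x Rs j xR) wSC xR jR.
      have -> : - a * (a * (wdeg W j - wS W Rs j) - a * wS W Rs j + h j) =
        - (a * a) * (wdeg W j - wS W Rs j) + (a * a) * wS W Rs j - a * h j by ring.
      by rewrite haa; ring.
    have hR0 : Rs != set0 by apply/set0Pn; exists i; rewrite inE.
    have hsub : Rs \subset ~: Sa W a h.
      apply/subsetP => j jR; rewrite in_setC inE -leNgt.
      have := hx j; rewrite val // => K.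
      have := wdS Rs j; have := wge0 (~: Rs) j; lra.
    have [j jR hj] := hb Rs hR0 hsub.
    have := hx j; rewrite val //; lra.
  + move=> hx; apply/EC; split.
      by move=> j; rewrite hx; case: a_pm1; auto.
    move=> i; rewrite hx.
    have -> : \sum_j W i j * x j = a * wdeg W i.
      by rewrite /wdeg big_distrr /=; apply: eq_bigr => j _; rewrite hx mulrC.
    have -> : a * (a * wdeg W i + h i) = (a * a) * wdeg W i + a * h i by ring.
    rewrite haa.
    case: (boolP (i \in Sa W a h)) => iS.
      move: iS; rewrite inE => K; have : 0 <= wdeg W i by apply: sumr_ge0.
         by lra.
    have h1 : [set i] != set0 by apply/set0Pn; exists i; rewrite in_set1.
    have h2 : [set i] \subset ~: Sa W a h by rewrite sub1set in_setC.
    have [j] := hb [set i] h1 h2.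
    rewrite in_set1 => /eqP -> {j}.
    rewrite wSC /wS big_set1 W_diag; lra.
Qed.
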